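(* Let $\mathcal H$ and $\mathcal H'$ be the rank-one-root affine Hecke algebras described in the context. There is no algebra homomorphism $I:\mathcal H\to\mathcal H'$ such that $I(T_s)=c'\theta_{k(\alpha')^\vee}T_{s'}+b'$ for some $c'\in\mathbb C^\times$, $k\in\frac12\mathbb Z$ and $b'\in\mathbb C[Y']$, and $I(\theta_{\alpha^\vee})=c\,\theta_{n(\alpha')^\vee}$ for some $c\in\mathbb C^\times$ and positive half-integer $n\in\frac12+\mathbb Z$ (here $k(\alpha')^\vee,n(\alpha')^\vee\in Y'$).
   Context: Let $\mathcal R=(X,R=\{\pm\alpha\},Y,R^\vee=\{\pm\alpha^\vee\},\Delta=\{\alpha\})$ and $\mathcal R'=(X',\{\pm\alpha'\},Y',\{\pm(\alpha')^\vee\},\{\alpha'\})$ be based root data (free $\mathbb Z$-modules of finite rank in perfect pairing, $\langle\alpha,\alpha^\vee\rangle=2$). Let $\lambda(\alpha),\lambda^*(\alpha),\lambda'(\alpha'),(\lambda^* )'(\alpha')$ be positive reals with $\lambda(\alpha)=\lambda^*(\alpha)$ unless $\alpha\in2X$ and $\lambda'(\alpha')=(\lambda^* )'(\alpha')$ unless $\alpha'\in2X'$. Fix $\mathbf q>1$; $q_1=\mathbf q^{\lambda(\alpha)}$, $q_0=\mathbf q^{\lambda^*(\alpha)}$, $q_1'=\mathbf q^{\lambda'(\alpha')}$, $q_0'=\mathbf q^{(\lambda^* )'(\alpha')}$. $s=s_\alpha$, $s'=s_{\alpha'}$. $\mathcal H=\mathbb C[Y]\otimes\mathcal H(W_0,q)$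 with $\mathbb C[Y]$ (basis $\theta_y$) and $\operatorname{span}(1,T_s)$, $(T_s+1)(T_s-q_1)=0$, as subalgebras and $\theta_yT_s-T_s\theta_{s(y)}=\big((q_1-1)+\theta_{-\alpha^\vee}(q_1^{1/2}q_0^{1/2}-q_1^{1/2}q_0^{-1/2})\big)\frac{\theta_y-\theta_{s(y)}}{\theta_0-\theta_{-2\alpha^\vee}}$; $\mathcal H'$ likewise from $\mathcal R',q_1',q_0'$ with generator $T_{s'}$. *)

(* Defs.v *)
From mathcomp Require Import all_boot all_algebra.
From mathcomp Require Import reals exp.
From mathcomp Require Import complex.
Set Implicit Arguments. Unset Strict Implicit. Unset Printing Implicit Defensive.
Import GRing.Theory Num.Theory.
Local Open Scope ring_scope.

(* Lattices X = Y = Z^r (row vectors of integers), in perfect pairing via the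
   standard dot product. Any perfect pairing of free Z-modules of rank r is
   isomorphic to this one. *)
Definition lat (r : nat) := 'rV[int]_r.

Definition pairing (r : nat) (x y : lat r) : int := \sum_(i < r) x 0 i * y 0 i.

Definition refl_Y (r : nat) (alpha alphav : lat r) (y : lat r) : lat r :=
  y - alphav *~ (pairing alpha y).

Definition in2X (r : nat) (alpha : lat r) : Prop := exists x : lat r, alpha = x *+ 2.

Definition rk1_datum (r : nat) (alpha alphav : lat r) (R : realType) (lam lamst : R) : Prop :=
  pairing alpha alphav = 2 /\ 0 < lam /\ 0 < lamst /\ (~ in2X alpha -> lam = lamst).

Definition bern_basis (C : fieldType) (A : algType C) (r : nat) (theta : lat r -> A) (T : A)
    (p : lat r * bool) : A :=
  theta p.1 * (if p.2 then T else 1).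

Definition in_CY (C : fieldType) (A : algType C) (r : nat) (theta : lat r -> A) (b : A) : Prop :=
  exists (s : seq (lat r)) (c : lat r -> C), b = \sum_(y <- s) c y *: theta y.

(* (A, theta, T) is the affine Hecke algebra H = C[Y] (x) H(W_0, q) of the rank-one
   datum (alpha, alphav) with parameters q1 = qb^lam, q0 = qb^lamst, i.e.
   - theta : Y -> A is multiplicative (C[Y] is a subalgebra with basis theta_y),
   - (T + 1)(T - q1) = 0,
   - the Bernstein cross relation holds, written after multiplying both sides by
     the denominator (theta_0 - theta_{-2 alpha^vee}) of C[Y] (a non-zero-divisor
     of H, so this is equivalent to the fractional form),
   - { theta_y T^eps } (y in Y, eps in {0,1}) is a C-basis of A. *)
Definition is_rank1_AHA (R : realType) (qb lam lamst : R) (r : nat) (alpha alphav : lat r)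
    (A : algType R[i]) (theta : lat r -> A) (T : A) : Prop :=
  let q1 : R := qb `^ lam in
  let q0 : R := qb `^ lamst in
  let q1C : R[i] := (q1%:C)%C in
  let kC : R[i] := ((Num.sqrt q1 * Num.sqrt q0 - Num.sqrt q1 / Num.sqrt q0)%:C)%C in
  theta 0 = 1 /\
  (forall y z, theta (y + z) = theta y * theta z) /\
  [/\ (T + 1) * (T - q1C *: 1) = 0,
      (forall y : lat r,
         (theta 0 - theta (- (alphav *+ 2))) *
           (theta y * T - T * theta (refl_Y alpha alphav y))
         = ((q1C - 1) *: 1 + kC *: theta (- alphav)) *
           (theta y - theta (refl_Y alpha alphav y))),
      (forall (s : seq (lat r * bool)) (c : lat r * bool -> R[i]),
         uniq s -> \sum_(p <- s) c p *: bern_basis theta T p = 0 ->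
         forall p, p \in s -> c p = 0) &
      (forall h : A, exists (s : seq (lat r * bool)) (c : lat r * bool -> R[i]),
         h = \sum_(p <- s) c p *: bern_basis theta T p)].

Definition is_alg_hom (C : fieldType) (A B : algType C) (I : A -> B) : Prop :=
  [/\ (forall (a : C) (x y : A), I (a *: x + y) = a *: I x + I y),
      (forall x y : A, I (x * y) = I x * I y) &
      I 1 = 1].

(* Main.v *)
Require Import Defs.
From mathcomp Require Import all_boot all_order all_algebra.
From mathcomp Require Import reals exp.
From mathcomp Require Import complex.
From Stdlib Require Import ClassicalEpsilon.
From mathcomp Require Import zify ring lra.
Import GRing.Theory Num.Theory.
Import Order.TTheory.
Local Open Scope ring_scope.

Module Aux.
Set Implicit Arguments. Unset Strict Implicit. Unset Printing Implicit Defensive.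
Section Basis.
Variables (C : fieldType) (A : lmodType C) (K : eqType) (b : K -> A).
Hypothesis indep : forall (s : seq K) (c : K -> C), uniq s ->
  \sum_(p <- s) c p *: b p = 0 -> forall p, p \in s -> c p = 0.
Hypothesis span : forall h : A, exists (s : seq K) (c : K -> C),
  h = \sum_(p <- s) c p *: b p.

Lemma partition_sum (M : zmodType) (t : seq (K * C)) (F : K * C -> M) :
  \sum_(u <- t) F u = \sum_(p <- undup (map fst t)) \sum_(u <- t | u.1 == p) F u.
Proof.
under [RHS]eq_bigr => p _ do rewrite big_mkcond.
rewrite exchange_big /=; apply: eq_big_seq => u ut.
rewrite -big_mkcond /= -big_filter.
have -> : [seq i <- undup [seq i.1 | i <- t] | u.1 == i] = [:: u.1].
  rewrite -(filter_pred1_uniq (undup_uniq [seq i.1 | i <- t])); last first.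
    by rewrite mem_undup; apply: map_f.
  by apply: eq_filter => x /=; rewrite eq_sym.
by rewrite big_seq1.
Qed.

Lemma gen_indep (t : seq (K * C)) :
  \sum_(u <- t) u.2 *: b u.1 = 0 -> forall p, \sum_(u <- t | u.1 == p) u.2 = 0.
Proof.
rewrite partition_sum => H p.
have H2 : \sum_(q <- undup (map fst t)) (\sum_(u <- t | u.1 == q) u.2) *: b q = 0.
  rewrite -[RHS]H; apply: eq_bigr => q _; rewrite scaler_suml.
  by apply: eq_bigr => u /eqP ->.
case pt: (p \in undup (map fst t)).
  exact: (indep (undup_uniq _) H2 pt).
rewrite big_seq_cond big1 // => u /andP [ut /eqP up].
by move: pt; rewrite mem_undup -up map_f.
Qed.

Definition rs (h : A) : seq K :=
  proj1_sig (constructive_indefinite_description _ (span h)).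
Definition rc (h : A) : K -> C :=
  proj1_sig (constructive_indefinite_description _
     (proj2_sig (constructive_indefinite_description _ (span h)))).
Lemma rep_spec h : h = \sum_(p <- rs h) rc h p *: b p.
Proof.
rewrite /rc /rs.
by case: (constructive_indefinite_description _ (span h)) => s /= hs;
  case: (constructive_indefinite_description _ hs).
Qed.

Definition Phi (w : K -> C) (h : A) : C := \sum_(p <- rs h) rc h p * w p.

Lemma Phi_repr w t h : h = \sum_(u <- t) u.2 *: b u.1 ->
  Phi w h = \sum_(u <- t) u.2 * w u.1.
Proof.
move=> ht.
set t' := t ++ map (fun p => (p, - rc h p)) (rs h).
have H0 : \sum_(u <- t') u.2 *: b u.1 = 0.
  rewrite big_cat big_map /=.
  rewrite (eq_bigr (fun j => - (rc h j *: b j))); last by move=> j _; rewrite scaleNr.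
  by rewrite sumrN -rep_spec -ht subrr.
have Hz := gen_indep H0.
have : \sum_(u <- t') u.2 * w u.1 = 0.
  rewrite partition_sum big1 // => p _.
  rewrite (eq_bigr (fun u => u.2 * w p)); last by move=> u /eqP ->.
  by rewrite -mulr_suml Hz mul0r.
rewrite big_cat big_map /=.
rewrite (eq_bigr (fun j => - (rc h j * w j))); last by move=> j _; rewrite mulNr.
rewrite sumrN /Phi => /eqP; rewrite subr_eq0 => /eqP ->.
by [].
Qed.

Lemma Phi_lin w a x y : Phi w (a *: x + y) = a * Phi w x + Phi w y.
Proof.
rewrite (@Phi_repr w (map (fun p => (p, a * rc x p)) (rs x) ++
                      map (fun p => (p, rc y p)) (rs y))).
  by rewrite big_cat !big_map /= /Phi mulr_sumr; congr (_ + _);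
     apply: eq_bigr => p _; rewrite mulrA.
rewrite big_cat !big_map /= {1}(rep_spec x) {1}(rep_spec y) scaler_sumr.
by congr (_ + _); apply: eq_bigr => p _; rewrite scalerA.
Qed.

Lemma Phi_b w p : Phi w (b p) = w p.
Proof.
rewrite (@Phi_repr w [:: (p, 1)]) ?big_seq1 ?mul1r ?scale1r //.
Qed.

Lemma Phi0 w : Phi w 0 = 0.
Proof.
have := Phi_lin w 1 0 0; rewrite scaler0 addr0 mul1r.
by move=> /(congr1 (fun x => x - Phi w 0)); rewrite subrr addrK.
Qed.
Lemma PhiD w x y : Phi w (x + y) = Phi w x + Phi w y.
Proof. by rewrite -{1}(scale1r x) Phi_lin mul1r. Qed.
Lemma PhiZ w a x : Phi w (a *: x) = a * Phi w x.
Proof. by rewrite -[a *: x]addr0 Phi_lin Phi0 addr0. Qed.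
Lemma PhiN w x : Phi w (- x) = - Phi w x.
Proof. by rewrite -scaleN1r PhiZ mulN1r. Qed.
Lemma PhiB w x y : Phi w (x - y) = Phi w x - Phi w y.
Proof. by rewrite PhiD PhiN. Qed.
Lemma Phi_sum w I (r : seq I) (F : I -> A) :
  Phi w (\sum_(i <- r) F i) = \sum_(i <- r) Phi w (F i).
Proof. by apply: (big_morph _ (PhiD w) (Phi0 w)). Qed.

Lemma Phi_wB w1 w2 h : Phi (fun p => w1 p - w2 p) h = Phi w1 h - Phi w2 h.
Proof. by rewrite /Phi -sumrB; apply: eq_bigr => p _; rewrite mulrBr. Qed.
Lemma Phi_ext w1 w2 h : (forall p, w1 p = w2 p) -> Phi w1 h = Phi w2 h.
Proof. by move=> e; rewrite /Phi; apply: eq_bigr => p _; rewrite e. Qed.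

Lemma ext_zero h : (forall p0, Phi (fun p => (p == p0)%:R) h = 0) -> h = 0.
Proof.
move=> H; rewrite (rep_spec h).
have -> : \sum_(p <- rs h) rc h p *: b p =
   \sum_(u <- map (fun p => (p, rc h p)) (rs h)) u.2 *: b u.1 by rewrite big_map.
rewrite partition_sum big1 // => q _.
rewrite (eq_bigr (fun u => u.2 *: b q)); last by move=> u /eqP ->.
rewrite -scaler_suml.
have -> : \sum_(u <- [seq (p, rc h p) | p <- rs h] | u.1 == q) u.2 = 0.
  rewrite -[RHS](H q) /Phi big_map big_mkcond /=; apply: eq_bigr => p _.
  by case: (p == q); rewrite ?mulr1 ?mulr0.
by rewrite scale0r.
Qed.
End Basis.

Section AHA.
Variables (C : fieldType) (A : algType C) (r : nat) (theta : lat r -> A) (T : A).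
Hypothesis theta0 : theta 0 = 1.
Hypothesis thetaD : forall y z, theta (y + z) = theta y * theta z.
Let b := bern_basis theta T.
Hypothesis indep : forall (s : seq (lat r * bool)) (c : lat r * bool -> C),
  uniq s -> \sum_(p <- s) c p *: b p = 0 -> forall p, p \in s -> c p = 0.
Hypothesis span : forall h : A, exists (s : seq (lat r * bool)) (c : lat r * bool -> C),
  h = \sum_(p <- s) c p *: b p.

Definition F w h := Phi span w h.

Definition trep (t : seq (lat r * C)) : A := \sum_(u <- t) u.2 *: theta u.1.

Lemma CY_trep h : in_CY theta h <-> exists t, h = trep t.
Proof.
split.
  by case=> s [c ->]; exists (map (fun y => (y, c y)) s); rewrite /trep big_map.
case=> t ->; exists (undup (map fst t)).
exists (fun y => \sum_(u <- t | u.1 == y) u.2).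
rewrite /trep (@partition_sum _ _ _ _ (fun u : lat r * C => u.2 *: theta u.1)).
apply: eq_bigr => y _; rewrite scaler_suml; apply: eq_bigr => u /eqP -> //.
Qed.

Lemma trep_mul t1 t2 :
  trep t1 * trep t2 = trep [seq (u.1 + v.1, u.2 * v.2) | u <- t1, v <- t2].
Proof.
rewrite /trep big_allpairs_dep mulr_suml; apply: eq_bigr => u _.
rewrite mulr_sumr; apply: eq_bigr => v _ /=.
by rewrite -scalerAl -scalerAr scalerA thetaD.
Qed.

Lemma CY_mul x y : in_CY theta x -> in_CY theta y -> in_CY theta (x * y).
Proof.
move=> /CY_trep [t1 ->] /CY_trep [t2 ->]; apply/CY_trep.
by eexists; apply: trep_mul.
Qed.
Lemma CY_add x y : in_CY theta x -> in_CY theta y -> in_CY theta (x + y).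
Proof.
move=> /CY_trep [t1 ->] /CY_trep [t2 ->]; apply/CY_trep.
by exists (t1 ++ t2); rewrite /trep big_cat.
Qed.
Lemma CY_scale a x : in_CY theta x -> in_CY theta (a *: x).
Proof.
move=> /CY_trep [t1 ->]; apply/CY_trep.
exists (map (fun u => (u.1, a * u.2)) t1); rewrite /trep big_map scaler_sumr.
by apply: eq_bigr => u _; rewrite scalerA.
Qed.
Lemma CY_opp x : in_CY theta x -> in_CY theta (- x).
Proof. by move=> h; rewrite -scaleN1r; apply: CY_scale. Qed.
Lemma CY_sub x y : in_CY theta x -> in_CY theta y -> in_CY theta (x - y).
Proof. by move=> hx hy; apply: CY_add => //; apply: CY_opp. Qed.
Lemma CY_theta y : in_CY theta (theta y).
Proof. by apply/CY_trep; exists [:: (y, 1)]; rewrite /trep big_seq1 scale1r. Qed.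
Lemma CY_1 : in_CY theta 1.
Proof. by rewrite -theta0; apply: CY_theta. Qed.

Lemma F_trep w t : F w (trep t) = \sum_(u <- t) u.2 * w (u.1, false).
Proof.
rewrite /F /trep (Phi_sum indep). apply: eq_bigr => u _.
rewrite (PhiZ indep); congr (_ * _).
have -> : theta u.1 = b (u.1, false) by rewrite /b /bern_basis /= mulr1.
by rewrite (Phi_b indep).
Qed.

Lemma F_trepT w t : F w (trep t * T) = \sum_(u <- t) u.2 * w (u.1, true).
Proof.
rewrite /F /trep mulr_suml (Phi_sum indep); apply: eq_bigr => u _.
rewrite -scalerAl (PhiZ indep); congr (_ * _).
have -> : theta u.1 * T = b (u.1, true) by [].
by rewrite (Phi_b indep).
Qed.

Lemma F_shift w z h : F w (theta z * h) = F (fun p => w (p.1 + z, p.2)) h.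
Proof.
rewrite /F {1}(rep_spec span h) mulr_sumr (Phi_sum indep) [RHS]/Phi; apply: eq_bigr => p _.
rewrite -scalerAr (PhiZ indep); congr (_ * _).
have -> : theta z * b p = b (p.1 + z, p.2).
  by rewrite /b /bern_basis /= mulrA -thetaD addrC.
by rewrite (Phi_b indep).
Qed.

Variable ell : lat r -> int.
Hypothesis ellD : forall y z, ell (y + z) = ell y + ell z.
Lemma ell0 : ell 0 = 0.
Proof.
have := ellD 0 0; rewrite addr0.
by move=> /(congr1 (fun x => x - ell 0)); rewrite subrr addrK.
Qed.
Lemma ellN y : ell (- y) = - ell y.
Proof. by apply/eqP; rewrite -subr_eq0 opprK -ellD addNr ell0. Qed.
Lemma ellMn y n : ell (y *+ n) = ell y *+ n.
Proof. by elim: n => [|n IH]; rewrite ?mulr0n ?ell0 // !mulrS ellD IH. Qed.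

Lemma cancel_lem z h : ell z != 0 -> (1 - theta z) * h = 0 -> h = 0.
Proof.
move=> ez H0; apply: (@ext_zero _ _ _ _ span h) => p0.
pose R y := exists j : nat, y = p0.1 - z *+ j.
pose w (p : lat r * bool) : C :=
  if excluded_middle_informative (p.2 = p0.2 /\ R p.1) then 1 else 0.
have : F w ((1 - theta z) * h) = 0 by rewrite H0 /F (Phi0 indep).
have -> : F w ((1 - theta z) * h) = F w h - F w (theta z * h).
  by rewrite mulrBl mul1r /F (PhiB indep).
rewrite F_shift /F -Phi_wB => <-.
apply: Phi_ext => p; rewrite /w /=.
have tors : forall j : nat, z *+ j.+1 != 0.
  move=> j; apply/eqP => /(congr1 ell); rewrite ellMn ell0 => /eqP.
  by rewrite mulrn_eq0 (negbTE ez).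
case: (excluded_middle_informative (p.2 = p0.2 /\ R p.1)) => [[e2 [j ej]]|n1] /=;
case: (excluded_middle_informative (p.2 = p0.2 /\ R (p.1 + z))) => [[e3 [j' ej']]|n2] /=.
- have Hp : p != p0.
    apply/negP => /eqP pe; move: ej'; rewrite pe => /(congr1 ell).
    rewrite ellD ellD ellN ellMn; move: ez; clear; lia.
  by rewrite (negbTE Hp) subrr.
- case: j ej => [|j] ej.
    have -> : p = p0.
      by rewrite [p]surjective_pairing [p0]surjective_pairing ej e2 mulr0n subr0.
    by rewrite eqxx subr0.
  exfalso; apply: n2; split => //; exists j.
  by rewrite ej mulrS opprD addrA addrAC subrK.
- exfalso; apply: n1; split => //; exists j'.+1.
  by rewrite -[p.1](addrK z) ej' mulrS opprD addrA addrAC.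
- have Hp : p != p0.
    apply/negP => /eqP pe; apply: n1; rewrite pe; split => //; exists 0%N.
    by rewrite mulr0n subr0.
  by rewrite (negbTE Hp) subrr.
Qed.


Definition wev (e : C) (p : lat r * bool) : C := if p.2 then 0 else e ^ (ell p.1).
Definition wdv (e : C) (p : lat r * bool) : C :=
  if p.2 then 0 else e ^ (ell p.1) * (ell p.1)%:~R.
Definition wtv (p : lat r * bool) : C := if p.2 then 1 else 0.

Lemma FD w x y : F w (x + y) = F w x + F w y.
Proof. exact: (PhiD indep). Qed.
Lemma FB w x y : F w (x - y) = F w x - F w y.
Proof. exact: (PhiB indep). Qed.
Lemma FZ w a x : F w (a *: x) = a * F w x.
Proof. exact: (PhiZ indep). Qed.

Lemma F_theta w y : F w (theta y) = w (y, false).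
Proof.
have -> : theta y = trep [:: (y, 1)] by rewrite /trep big_seq1 scale1r.
by rewrite F_trep big_seq1 mul1r.
Qed.

Lemma F1 w : F w 1 = w (0, false).
Proof. by rewrite -theta0 F_theta. Qed.

Lemma FT_tv m : in_CY theta m -> F wtv (m * T) = F (wev 1) m.
Proof.
move=> /CY_trep [t ->]; rewrite F_trepT F_trep.
by apply: eq_bigr => u _; rewrite /wtv /wev /= exp1rz.
Qed.
Lemma F_tv m : in_CY theta m -> F wtv m = 0.
Proof.
move=> /CY_trep [t ->]; rewrite F_trep big1 // => u _.
by rewrite /wtv /= mulr0.
Qed.
Lemma FT_dv e m : in_CY theta m -> F (wdv e) (m * T) = 0.
Proof.
move=> /CY_trep [t ->]; rewrite F_trepT big1 // => u _.
by rewrite /wdv /= mulr0.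
Qed.

Lemma F_ev_mul e x y : e != 0 -> in_CY theta x -> in_CY theta y ->
  F (wev e) (x * y) = F (wev e) x * F (wev e) y.
Proof.
move=> e0 /CY_trep [t1 ->] /CY_trep [t2 ->].
rewrite trep_mul !F_trep big_allpairs_dep big_distrlr /=.
apply: eq_bigr => u _; apply: eq_bigr => v _.
by rewrite /wev /= ellD expfzDr // mulrACA.
Qed.

Lemma F_dv_mul e x y : e != 0 -> in_CY theta x -> in_CY theta y ->
  F (wdv e) (x * y) = F (wdv e) x * F (wev e) y + F (wev e) x * F (wdv e) y.
Proof.
move=> e0 /CY_trep [t1 ->] /CY_trep [t2 ->].
rewrite trep_mul !F_trep big_allpairs_dep !big_distrlr -big_split /=.
apply: eq_bigr => u _; rewrite -big_split; apply: eq_bigr => v _.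
rewrite /wev /wdv /= ellD expfzDr // intrD.
ring.
Qed.

End AHA.

End Aux.
Import Aux.

Lemma pairingDr r (x y z : lat r) : pairing x (y + z) = pairing x y + pairing x z.
Proof. by rewrite /pairing -big_split; apply: eq_bigr => i _; rewrite mxE mulrDr. Qed.

Lemma pairingMnl r (x y : lat r) n : pairing (x *+ n) y = pairing x y *+ n.
Proof.
rewrite /pairing -sumrMnl; apply: eq_bigr => i _.
by rewrite mulmxnE mulrnAl.
Qed.

Lemma CY0 (C : fieldType) (A : algType C) r (theta : lat r -> A) : in_CY theta 0.
Proof. by exists [::], (fun=> 0); rewrite big_nil. Qed.

Ltac solveCY th0 thD :=
  repeat first [ apply: (CY_mul thD) | apply: CY_sub | apply: CY_add | apply: CY_opp
               | apply: CY_scale | apply: CY_theta | apply: (CY_1 th0) | apply: CY0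
               | assumption ].

Theorem lemmaD3 (R : realType) (qb : R) (hqb : 1 < qb)
    (r : nat) (alpha alphav : lat r) (lam lamst : R)
    (hR : rk1_datum alpha alphav lam lamst)
    (r' : nat) (alpha' alphav' : lat r') (lam' lamst' : R)
    (hR' : rk1_datum alpha' alphav' lam' lamst')
    (H : algType R[i]) (theta : lat r -> H) (T : H)
    (hH : is_rank1_AHA qb lam lamst alpha alphav theta T)
    (H' : algType R[i]) (theta' : lat r' -> H') (T' : H')
    (hH' : is_rank1_AHA qb lam' lamst' alpha' alphav' theta' T') :
  ~ (exists I : H -> H',
       is_alg_hom I /\
       (exists (c' : R[i]) (k : int) (yk : lat r') (b' : H'),
          [/\ c' != 0, yk *+ 2 = alphav' *~ k, in_CY theta' b' &
              I T = c' *: (theta' yk * T') + b']) /\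
       (exists (c : R[i]) (n : nat) (yn : lat r'),
          [/\ c != 0, odd n, yn *+ 2 = alphav' *~ n%:Z &
              I (theta alphav) = c *: theta' yn])).
Proof.
move=> [I [[hIlin hImul hI1] [[c' [k [yk [b' [c'0 hyk hb' hIT]]]]] [c [n [yn [c0 hn hyn hIth]]]]]]].
case: hH => th0 [thD [_ hcross _ _]].
case: hH' => th0' [thD' [_ hcross' hind' hspan']].
case: hR => hpair [lam0 [lamst0 hlam]].
case: hR' => hpair' [lam0' [lamst0' hlam']].
set ell := pairing alpha'.
have hp2 : ell alphav' = 2 := hpair'.
have ellD : forall y z, ell (y + z) = ell y + ell z by move=> y z; apply: pairingDr.
have ell_mulz : forall y (m : int), ell (y *~ m) = ell y * m.
  move=> y [m|m].
    by rewrite -pmulrn (ellMn ellD); lia.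
  by rewrite NegzE mulrNz (ellN ellD) -pmulrn (ellMn ellD); lia.
have hln : ell yn = n%:Z.
  have := congr1 ell hyn; rewrite (ellMn ellD) ell_mulz hp2 mulr2n; lia.
have hlk : ell yk = k.
  have := congr1 ell hyk; rewrite (ellMn ellD) ell_mulz hp2 mulr2n; lia.
have hrefl : refl_Y alpha' alphav' yn = - yn.
  by rewrite /refl_Y -/ell hln -hyn mulr2n opprD addrA subrr add0r.
have hlam2 : lam' = lamst'.
  apply: hlam' => -[x hx].
  have := hln; rewrite /ell hx pairingMnl mulr2n => h2.
  have := odd_double_half n; rewrite hn => hn2.
  move: h2; rewrite -hn2 -muln2; lia.
rewrite -hlam2 in hcross'.
set Q := qb `^ lam' in hcross'.
have Q0 : 0 < Q by apply: powR_gt0; exact: lt_trans ltr01 hqb.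
set K1 : R[i] := ((Q - 1)%:C)%C.
have hK1 : ((Q%:C)%C - 1) = K1 by rewrite /K1 rmorphB rmorph1.
have hK2 : ((Num.sqrt Q * Num.sqrt Q - Num.sqrt Q / Num.sqrt Q)%:C)%C = K1.
  have sq0 : Num.sqrt Q != 0 by rewrite sqrtr_eq0 -ltNge.
  by rewrite -expr2 sqr_sqrtr ?ltW // divff.
rewrite hK1 hK2 in hcross'.
set Y := theta' yn; set Yi := theta' (- yn); set a := theta' (- alphav').
set D := \sum_(j < n) theta' (yn - alphav' *+ j).
have hyn2 : alphav' *+ n = yn *+ 2 by rewrite hyn pmulrn.
have hD1 : (1 - a) * D = Y - Yi.
  rewrite /D mulr_sumr.
  have Hj : forall j, (1 - a) * theta' (yn - alphav' *+ j) =
     theta' (yn - alphav' *+ j) - theta' (yn - alphav' *+ j.+1).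
    move=> j; rewrite mulrBl mul1r /a -thD'; congr (_ - theta' _).
    by rewrite mulrS opprD addrCA.
  under eq_bigr => j _ do rewrite Hj.
  rewrite -(big_mkord xpredT (fun j => theta' (yn - alphav' *+ j) - theta' (yn - alphav' *+ j.+1))).
  have tel := telescope_sumr (fun j => theta' (yn - alphav' *+ j)) (leq0n n).
  have -> : \sum_(0 <= j < n) (theta' (yn - alphav' *+ j) - theta' (yn - alphav' *+ j.+1))
     = - \sum_(0 <= j < n) (theta' (yn - alphav' *+ j.+1) - theta' (yn - alphav' *+ j)).
    by rewrite -sumrN; apply: eq_bigr => j _; rewrite opprB.
  rewrite tel opprB mulr0n subr0 hyn2 mulr2n opprD addrA subrr add0r.
  by [].
have hZ : theta' 0 - theta' (alphav' *- 2) = (1 + a) * (1 - a).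
  rewrite th0' mulr2n opprD thD' mulrDl mul1r mulrBr mulr1 addrA subrK.
  by [].
have hTYi : T' * Yi = Y * T' - K1 *: D.
  have := hcross' yn; rewrite hrefl hZ => hc.
  have hz : ell (alphav' *- 2) != 0 by rewrite (ellN ellD) (ellMn ellD) hp2.
  have := @cancel_lem _ _ _ _ _ thD' hind' hspan' ell ellD _
            ((Y * T' - T' * Yi) - K1 *: D) hz.
  rewrite th0' in hZ.
  rewrite hZ mulrBr hc -scalerAr -mulrA hD1 -scalerDr -scalerAl subrr.
  move=> /(_ erefl) /eqP; rewrite subr_eq0 => /eqP <-.
  by rewrite opprB addrC subrK.
have I0 : I 0 = 0.
  have := hIlin 1 0 0; rewrite scaler0 addr0 scale1r.
  by move=> /(congr1 (fun x => x - I 0)); rewrite subrr addrK.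
have IZ : forall a x, I (a *: x) = a *: I x.
  by move=> a0 x; rewrite -[a0 *: x]addr0 hIlin I0 addr0.
have ID : forall x y, I (x + y) = I x + I y.
  by move=> x y; have := hIlin 1 x y; rewrite !scale1r.
have IB : forall x y, I (x - y) = I x - I y.
  by move=> x y; rewrite ID -scaleN1r IZ scaleN1r.
set ci := c^-1.
have cci : c * ci = 1 by rewrite /ci divff.
set U := c *: Y; set Ui := ci *: Yi.
have hIth' : I (theta alphav) = U := hIth.
have YYi : Y * Yi = 1 by rewrite /Y /Yi -thD' subrr th0'.
have YiY : Yi * Y = 1 by rewrite /Y /Yi -thD' addNr th0'.
have hIthN : I (theta (- alphav)) = Ui.
  have h1 : I (theta (- alphav)) * U = 1.
    by rewrite -hIth' -hImul -thD addNr th0 hI1.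
  have h2 : U * Ui = 1 by rewrite /U /Ui -scalerAl -scalerAr scalerA cci YYi scale1r.
  by rewrite -[LHS]mulr1 -h2 mulrA h1 mul1r.
have hreflH : refl_Y alpha alphav alphav = - alphav.
  by rewrite /refl_Y hpair -pmulrn mulr2n opprD addrA subrr add0r.
have hc := hcross alphav.
rewrite hreflH th0 -/(pairing alpha alphav) in hc.
move: hc.
set KA := (_ - 1 : R[i]).
set KB := (X in _ + X *: theta (- alphav)).
move=> hc.
have Heq0 := congr1 I hc.
rewrite !hImul !IB !ID !hImul !IZ hI1 hIth' hIthN in Heq0.
have htt : theta (alphav *- 2) = theta (- alphav) * theta (- alphav).
  by rewrite -thD mulr2n opprD.
rewrite htt hImul hIthN hIT in Heq0.
set A0 := theta' yk in Heq0.
have hUIT : U * (c' *: (A0 * T') + b') = (c * c') *: ((Y * A0) * T') + c *: (Y * b').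
  by rewrite mulrDr /U -!scalerAl -!scalerAr scalerA !mulrA.
have hITUi : (c' *: (A0 * T') + b') * Ui =
   (c' * ci) *: ((A0 * Y) * T') - (c' * ci * K1) *: (A0 * D) + ci *: (b' * Yi).
  have e1 : (c' *: (A0 * T')) * (ci *: Yi) = (c' * ci) *: (A0 * (T' * Yi)).
    by rewrite -scalerAl -scalerAr scalerA mulrA.
  have e2 : b' * (ci *: Yi) = ci *: (b' * Yi) by rewrite -scalerAr.
  rewrite /Ui mulrDl e1 e2 hTYi mulrBr mulrA scalerBr -scalerAr scalerA.
  by [].
rewrite hUIT hITUi in Heq0.
have hDCY : in_CY theta' D.
  rewrite /D; elim/big_ind: _ => //; first exact: CY0.
    by move=> x y hx hy; apply: CY_add.
  by move=> j _; apply: CY_theta.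
set Z := 1 - Ui * Ui in Heq0.
have hZCY : in_CY theta' Z by rewrite /Z /Ui; solveCY th0' thD'.
have LHSexp : forall w,
  F hspan' w (Z * ((c * c') *: (Y * A0 * T') + c *: (Y * b') -
     ((c' * ci) *: (A0 * Y * T') - (c' * ci * K1) *: (A0 * D) + ci *: (b' * Yi))))
  = (c * c') * F hspan' w ((Z * (Y * A0)) * T') + c * F hspan' w (Z * (Y * b')) -
     ((c' * ci) * F hspan' w ((Z * (A0 * Y)) * T') - (c' * ci * K1) * F hspan' w (Z * (A0 * D))
       + ci * F hspan' w (Z * (b' * Yi))).
  move=> w.
  rewrite mulrBr mulrDr mulrDr mulrBr -!scalerAr !(FB hind', FD hind', FZ hind').
  by rewrite !mulrA.
have evth : forall e y, F hspan' (wev ell e) (theta' y) = e ^ (ell y).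
  by move=> e y; rewrite (F_theta hind').
have dvth : forall e y, F hspan' (wdv ell e) (theta' y) = e ^ (ell y) * (ell y)%:~R.
  by move=> e y; rewrite (F_theta hind').
have ev1 : forall e, F hspan' (wev ell e) 1 = 1.
  by move=> e; rewrite -th0' evth (ell0 ellD).
have dv1 : forall e, F hspan' (wdv ell e) 1 = 0.
  by move=> e; rewrite -th0' dvth (ell0 ellD) mulr0.
have hYCY : in_CY theta' Y by apply: CY_theta.
have hYiCY : in_CY theta' Yi by apply: CY_theta.
have hA0CY : in_CY theta' A0 by apply: CY_theta.
have hUiCY : in_CY theta' Ui by apply: CY_scale.
have evZ : forall e, e != 0 -> F hspan' (wev ell e) Z =
   1 - (ci * F hspan' (wev ell e) Yi) * (ci * F hspan' (wev ell e) Yi).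
  move=> e e0; rewrite /Z (FB hind') ev1 (F_ev_mul thD' hind' hspan' ellD e0) //.
  by rewrite /Ui (FZ hind').
have Hi := congr1 (F hspan' (@wtv _ r')) Heq0.
rewrite LHSexp in Hi.
rewrite !(FT_tv hind' hspan' ell) in Hi; try by solveCY th0' thD'.
rewrite !(F_tv hind' hspan') in Hi; try by solveCY th0' thD'.
have e10 : (1 : R[i]) != 0 := oner_neq0 _.
rewrite !(F_ev_mul thD' hind' hspan' ellD e10) in Hi; try by solveCY th0' thD'.
rewrite evZ // !evth !exp1rz in Hi.
have cE : ci = c.
  have h : c' * ci * (c - ci) ^+ 2 = 0.
    transitivity (c' * (c - ci) * (1 - ci * ci) - c' * (c - ci) * (1 - c * ci)).
      by ring.
    rewrite cci subrr mulr0 subr0 -[RHS]Hi; ring.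
  have ci0 : ci != 0 by rewrite invr_eq0.
  move: h => /eqP; rewrite !mulf_eq0 (negbTE c'0) (negbTE ci0) /=.
  by case/orP => /eqP /subr0_eq ->.
have cc1 : c * c = 1 by rewrite -{2}cE.
have key : forall e : R[i], e * e = 1 ->
    n%:R * c' * K1 * e ^ k = KA + KB * c * e ^ (n%:Z).
  move=> e ee.
  have e0 : e != 0 by apply/eqP => e0; move: ee; rewrite e0 mulr0 => /eqP; rewrite eq_sym oner_eq0.
  have eE2 : forall z : int, e ^ z * e ^ z = 1 by move=> z; rewrite -expfzMl ee exp1rz.
  have eN : forall z : int, e ^ (- z) = e ^ z.
    move=> z; apply: (mulfI (expfz_neq0 z e0)); rewrite eE2 -expfzDr // subrr.
    by [].
  set E := e ^ (n%:Z).
  have EE : E * E = 1 by apply: eE2.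
  have evY : F hspan' (wev ell e) Y = E by rewrite evth hln.
  have evYi : F hspan' (wev ell e) Yi = E by rewrite evth (ellN ellD) hln eN.
  have evA : F hspan' (wev ell e) A0 = e ^ k by rewrite evth hlk.
  have dvY : F hspan' (wdv ell e) Y = E * n%:R by rewrite dvth hln.
  have dvYi : F hspan' (wdv ell e) Yi = - (E * n%:R).
    by rewrite dvth (ellN ellD) hln eN intrN mulrN.
  have evU : F hspan' (wev ell e) U = c * E by rewrite /U (FZ hind') evY.
  have evUi : F hspan' (wev ell e) Ui = c * E by rewrite /Ui (FZ hind') evYi cE.
  have dvU : F hspan' (wdv ell e) U = c * (E * n%:R) by rewrite /U (FZ hind') dvY.
  have dvUi : F hspan' (wdv ell e) Ui = - (c * (E * n%:R)) by rewrite /Ui (FZ hind') dvYi cE mulrN.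
  have evZ0 : F hspan' (wev ell e) Z = 0.
    rewrite /Z (FB hind') ev1 (F_ev_mul thD' hind' hspan' ellD e0) // evUi.
    by rewrite mulrACA cc1 EE mul1r subrr.
  have dvZ : F hspan' (wdv ell e) Z = 2 * n%:R.
    rewrite /Z (FB hind') dv1 (F_dv_mul thD' hind' hspan' ellD e0) // evUi dvUi.
    transitivity (2 * n%:R * ((c * c) * (E * E))); first by ring.
    by rewrite cc1 EE !mulr1.
  have evD : F hspan' (wev ell e) D = n%:R * E.
    rewrite /D /F (Phi_sum hind') -/(F _ _).
    rewrite (eq_bigr (fun _ => E)); last first.
      move=> j _; rewrite -/(F hspan' _ _) evth ellD (ellN ellD) (ellMn ellD) hln hp2.
      rewrite expfzDr // eN.
      have -> : e ^ (2 *+ j) = 1.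
        have -> : (2 *+ j : int) = j%:Z + j%:Z by lia.
        by rewrite expfzDr // eE2.
      by rewrite mulr1.
    by rewrite sumr_const card_ord mulr_natl.
  have Hii := congr1 (F hspan' (wdv ell e)) Heq0.
  rewrite LHSexp in Hii.
  rewrite !(FT_dv hind' hspan' ell) in Hii; try by solveCY th0' thD'.
  rewrite !(F_dv_mul thD' hind' hspan' ellD e0) in Hii; try by solveCY th0' thD'.
  rewrite !(F_ev_mul thD' hind' hspan' ellD e0) in Hii; try by solveCY th0' thD'.
  rewrite !evZ0 !dvZ in Hii.
  rewrite !(FB hind', FD hind', FZ hind') in Hii.
  rewrite ?evY ?evYi ?evA ?evD ?evU ?evUi ?dvU ?dvUi ?ev1 ?dv1 ?dvY ?dvYi in Hii.
  rewrite cE in Hii.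
  move: Hii; set Lhs := (X in X = _); set Rhs := (X in _ = X) => Hii.
  have hprod : 2 * c * n%:R * E * (n%:R * c' * K1 * e ^ k - (KA + KB * c * E))
      = Lhs - Rhs by rewrite /Lhs /Rhs; ring.
  rewrite Hii subrr in hprod.
  have n0 : n%:R != 0 :> R[i] by rewrite pnatr_eq0; apply/eqP => n0; move: hn; rewrite n0.
  have E0 : E != 0 by apply/eqP => E0; move: EE; rewrite E0 mulr0 => /eqP; rewrite eq_sym oner_eq0.
  have two0 : 2 != 0 :> R[i] by rewrite pnatr_eq0.
  move: hprod => /eqP; rewrite !mulf_eq0 (negbTE two0) (negbTE c0) (negbTE n0) (negbTE E0) /=.
  by rewrite subr_eq0 => /eqP.
have k1 := key 1 (mulr1 1).
rewrite !exp1rz !mulr1 in k1.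
have km : n%:R * c' * K1 * (-1) ^ k = KA + KB * c * (-1) ^ (n%:Z).
  by apply: key; rewrite mulrNN mulr1.
rewrite -exprnP -signr_odd hn expr1 in km.
set s := (-1) ^ k in km.
have ss : s * s = 1 by rewrite /s -expfzMl mulrNN mulr1 exp1rz.
have qbp : 0 < qb by exact: lt_trans ltr01 hqb.
have q1n1 : forall x : R, 0 < x -> qb `^ x != 1.
  move=> x x0; rewrite powR_eq1 negb_or negb_or gt_eqF //= -leNgt ltW //=.
  by rewrite gt_eqF.
have KA0 : KA != 0.
  by rewrite /KA -(rmorph1 (real_complex R)) -rmorphB fmorph_eq0 subr_eq0 q1n1.
have KB0 : KB != 0.
  rewrite /KB fmorph_eq0.
  set s1 := Num.sqrt (qb `^ lam); set s0 := Num.sqrt (qb `^ lamst).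
  have s1p : 0 < s1 by rewrite sqrtr_gt0 powR_gt0.
  have s0p : 0 < s0 by rewrite sqrtr_gt0 powR_gt0.
  have -> : s1 * s0 - s1 / s0 = s1 / s0 * (s0 ^+ 2 - 1).
    by field; rewrite gt_eqF.
  rewrite sqr_sqrtr ?powR_ge0 // !mulf_eq0 invr_eq0 (gt_eqF s1p) (gt_eqF s0p) /=.
  by rewrite subr_eq0 q1n1.
have two0 : 2 != 0 :> R[i] by rewrite pnatr_eq0.
have : (s - 1) * (s + 1) = 0.
  transitivity (s * s - 1); first by ring.
  by rewrite ss subrr.
move=> /eqP; rewrite mulf_eq0 => /orP [] /eqP hs.
- have s1' : s = 1 by apply/eqP; rewrite -subr_eq0 hs.
  rewrite s1' mulr1 k1 in km.
  have : 2 * (KB * c) = 0.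
    transitivity ((KA + KB * c) - (KA + KB * c * -1)); first by ring.
    by rewrite km subrr.
  move=> /eqP; rewrite !mulf_eq0 (negbTE two0) (negbTE KB0) (negbTE c0).
  by [].
- have s1' : s = -1 by apply/eqP; rewrite -subr_eq0 opprK hs.
  rewrite s1' k1 in km.
  have : 2 * KA = 0.
    transitivity ((KA + KB * c * -1) - (KA + KB * c) * -1); first by ring.
    by rewrite km subrr.
  move=> /eqP; rewrite !mulf_eq0 (negbTE two0) (negbTE KA0).
  by [].
Qed.
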